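(* Let $G=(V,E)$ be a finite simple graph with nonempty vertex set and burning number $b(G)$. Consider the following procedure (the burning greedy permutation algorithm, BGP), which receives only $G$ as input. Choose $s_1\in V$ arbitrarily and set $k=1$. While $\bigcup_{i=1}^{k}N_{k-i}[s_i]\neq V$, let $s_{k+1}$ be any vertex $u\in V$ maximizing $d(u,\{s_1,\dots,s_k\})$ (ties broken arbitrarily) and increase $k$ by one. Return $(s_1,\dots,s_k)$. Then, for every choice made by this procedure, it terminates and returns a burning sequence of $G$ of length at most $3b(G)-2$; that is, BGP is a $(3-2/b(G))$-approximation algorithm for the graph burning problem.
   Context: For vertices $u,v$ of $G$, $d(u,v)$ is the number of edges on a shortest $u$–$v$ path ($+\infty$ if none exists), and for $S\subseteq V$, $d(u,S)=\min_{w\in S}d(u,w)$. For $v\in V$ and an integer $r\ge 0$, $N_r[v]=\{u\in V: d(u,v)\le r\}$ is the closed $r$-th neighborhood of $v$ (so $N_0[v]=\{v\}$). A burning sequence of length $k$ is a sequence $(s_1,\dots,s_k)$ of vertices of $G$ (repetitions allowed) such that $\bigcup_{i=1}^{k}N_{k-i}[s_i]=V$; equivalently, if in round $i$ vertex $s_i$ becomes burned and every neighbor of a vertex burned in an earlier round becomes burned, then all vertices are burned after round $k$. The burning number $b(G)$ is the minimum length of a burning sequence of $G$. *)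

(* Defs.v *)
From mathcomp Require Import all_boot.
Set Implicit Arguments. Unset Strict Implicit. Unset Printing Implicit Defensive.

Section Burning.
Variables (T : finType) (e : rel T).

Definition walkn (u v : T) (n : nat) : bool :=
  [exists t : n.-tuple T, path e u t && (last u t == v)].

Lemma connect_walkn u v : connect e u v -> exists n, walkn u v n.
Proof.
move=> /connectP [p pp lp]; exists (size p); apply/existsP.
exists (in_tuple p); by rewrite /= pp -lp eqxx.
Qed.

(* d(u,v): None stands for +infinity (no path). In a simple graph the least
   number of edges of a u-v walk is the length of a shortest u-v path. *)
Definition dist (u v : T) : option nat :=
  match @idP (connect e u v) with
  | ReflectT H => Some (ex_minn (connect_walkn H))
  | ReflectF _ => None
  end.

Definition ole (a b : option nat) : bool :=
  match a, b with
  | _, None => true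
  | None, Some _ => false
  | Some x, Some y => x <= y
  end.

Definition omin (a b : option nat) : option nat := if ole a b then a else b.

Definition setdist (u : T) (S : seq T) : option nat :=
  foldr omin None [seq dist u w | w <- S].

Definition ball (v : T) (r : nat) : {set T} := [set u | ole (dist u v) (Some r)].

(* cover [:: s_1; ...; s_k] = \bigcup_{i=1}^k N_{k-i}[s_i] *)
Fixpoint cover (q : seq T) : {set T} :=
  if q is x :: q' then ball x (size q') :|: cover q' else set0.

Definition burning_seq (q : seq T) : Prop := cover q = [set: T].

Definition is_burning_number (b : nat) : Prop :=
  (exists q, size q = b /\ burning_seq q) /\
  (forall q, burning_seq q -> b <= size q).

End Burning.

(* Main.v *)
Require Import Defs.
From mathcomp Require Import all_boot zify.
Set Implicit Arguments. Unset Strict Implicit. Unset Printing Implicit Defensive.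

Lemma walk0 (T : finType) (e : rel T) u : walkn e u u 0.
Proof. apply/existsP; exists [tuple]; by rewrite /= eqxx. Qed.

Lemma walk_cat (T : finType) (e : rel T) u x v a c :
  walkn e u x a -> walkn e x v c -> walkn e u v (a + c).
Proof.
move=> /existsP [t1 /andP [p1 /eqP l1]] /existsP [t2 /andP [p2 /eqP l2]].
apply/existsP; exists [tuple of t1 ++ t2].
by rewrite /= cat_path last_cat l1 p1 p2 l2 eqxx.
Qed.

Lemma walk_sym (T : finType) (e : rel T) (e_sym : symmetric e) u v n :
  walkn e u v n -> walkn e v u n.
Proof.
move=> /existsP [t /andP [p /eqP l]].
have sz : size (rev (belast u t)) == n by rewrite size_rev size_belast size_tuple.
apply/existsP; exists (Tuple sz) => /=; apply/andP; split.
  rewrite -l rev_path; rewrite (@eq_path _ _ e) //; by move=> a b; rewrite e_sym.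
rewrite -l -(last_cons (last u t)) -rev_rcons -lastI rev_cons last_rcons //.
Qed.

Lemma walk_connect (T : finType) (e : rel T) u v n : walkn e u v n -> connect e u v.
Proof. move=> /existsP [t /andP [p /eqP l]]; apply/connectP; by exists t. Qed.

Lemma dist_le (T : finType) (e : rel T) u v n :
  ole (dist e u v) (Some n) <-> exists2 m, m <= n & walkn e u v m.
Proof.
rewrite /dist; destruct (@idP (connect e u v)) as [H|H] => /=.
  split.
    case: ex_minnP => m Hm _ le; by exists m.
  move=> [m le w]; case: ex_minnP => m' _ Hmin; exact: leq_trans (Hmin _ w) le.
split => //. move=> [m _ w]; exfalso; apply: H; exact: walk_connect w.
Qed.

Lemma ole_trans a b c : ole a b -> ole b c -> ole a c.
Proof. case: a; case: b; case: c => //= x y z; exact: leq_trans. Qed.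

Lemma ole_refl a : ole a a.
Proof. by case: a => /=. Qed.

Lemma omin_l a b : ole (omin a b) a.
Proof.
rewrite /omin; case: ifP => h; first exact: ole_refl.
move: h; case: a; case: b => //= x y /negbT; rewrite -ltnNge => /ltnW //.
Qed.

Lemma omin_r a b : ole (omin a b) b.
Proof.
rewrite /omin; case: ifP => h; last exact: ole_refl.
by [].
Qed.

Lemma setdist_le (T : finType) (e : rel T) u S w : w \in S -> ole (setdist e u S) (dist e u w).
Proof.
elim: S => //= y S IH; rewrite in_cons => /orP [/eqP -> | /IH h].
  exact: omin_l.
exact: ole_trans (omin_r _ _) h.
Qed.

Lemma setdist_cases (T : finType) (e : rel T) u S :
  setdist e u S = None \/ exists2 w, w \in S & setdist e u S = dist e u w.
Proof.
elim: S => [|y S IH] /=; first by left.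
rewrite /setdist /= -/(setdist e u S) /omin; case: ifP => _.
  right; exists y => //; exact: mem_head.
case: IH => [->|[w wS ->]]; first by left.
right; exists w => //; by rewrite in_cons wS orbT.
Qed.

Lemma setdist_sub (T : finType) (e : rel T) u S S' : {subset S <= S'} ->
  ole (setdist e u S') (setdist e u S).
Proof.
move=> sub; case: (setdist_cases e u S) => [->|[w wS ->]].
  by case: (setdist _ _ _).
apply: setdist_le; exact: sub.
Qed.

Lemma cover_nth (T : finType) (e : rel T) (q : seq T) x0 i :
  i < size q -> ball e (nth x0 q i) (size q - 1 - i) \subset Defs.cover e q.
Proof.
elim: q i => //= y q IH [|i] /= hi.
  by rewrite subn0 subn1 /=; apply: subsetUl.
apply: subset_trans (subsetUr _ _).
have -> : (size q).+1 - 1 - i.+1 = size q - 1 - i by lia.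
exact: IH.
Qed.

Lemma cover_mem (T : finType) (e : rel T) (q : seq T) x0 u : u \in Defs.cover e q ->
  exists2 i, i < size q & u \in ball e (nth x0 q i) (size q - 1 - i).
Proof.
elim: q => [|y q IH] /=; first by rewrite inE.
rewrite inE => /orP [h|/IH [i hi h]].
  by exists 0 => //; rewrite subn0 subn1.
exists i.+1 => //.
have -> : (size q).+1 - 1 - i.+1 = size q - 1 - i by lia.
exact: h.
Qed.

Lemma tri (T : finType) (e : rel T) (e_sym : symmetric e) a c x r1 r2 :
  ole (dist e a x) (Some r1) -> ole (dist e c x) (Some r2) ->
  ole (dist e c a) (Some (r2 + r1)).
Proof.
move=> /dist_le [m1 h1 w1] /dist_le [m2 h2 w2]; apply/dist_le.
exists (m2 + m1); first exact: leq_add.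
apply: walk_cat w2 _; exact: walk_sym w1.
Qed.

Theorem theorem2 (T : finType) (e : rel T) (e_sym : symmetric e)
    (e_irr : irreflexive e) (b : nat) (hb : is_burning_number e b)
    (s : nat -> T)
    (greedy : forall k, 0 < k -> ~ burning_seq e (mkseq s k) ->
       forall u : T, ole (setdist e u (mkseq s k)) (setdist e (s k) (mkseq s k))) :
  exists k, [/\ 0 < k, k <= 3 * b - 2, burning_seq e (mkseq s k) &
    forall j, 0 < j -> j < k -> ~ burning_seq e (mkseq s j)].
Proof.
have x0 : T := s 0.
case: hb => [[q [szq bq]] hmin].
have b_pos : 0 < b.
  case: b szq {greedy hmin} => // /size0nil qnil.
  move: bq; rewrite qnil /burning_seq /= => h.
  have : s 0 \in [set: T] by rewrite inE.
  by rewrite -h inE.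
suff [K [K0 Kle KB]] : exists K, [/\ 0 < K, K <= 3*b-2 & burning_seq e (mkseq s K)].
  have ex : exists k, (0 < k) && (Defs.cover e (mkseq s k) == [set: T]).
    by exists K; rewrite K0 KB eqxx.
  case: (ex_minnP ex) => k /andP [k0 /eqP kb] kmin.
  exists k; split => //.
    by apply: leq_trans (kmin K _) Kle; rewrite K0 KB eqxx.
  move=> j j0 jk jb; have := kmin j; rewrite j0 jb eqxx /= => /(_ isT).
  by rewrite leqNgt jk.
case: (boolP [exists j : 'I_b.+1, (0 < j) && (Defs.cover e (mkseq s j) == setT)]).
  move=> /existsP [j /andP [j0 /eqP jb]]; exists j; split => //.
  have := ltn_ord j; lia.
rewrite negb_exists => /forallP nob.
have nob' : forall j, 0 < j -> j <= b -> ~ burning_seq e (mkseq s j).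
  move=> j j0 jb bj; have jb' : j < b.+1 by [].
  by have := nob (Ordinal jb'); rewrite /= j0 bj eqxx.
set D := setdist e (s b) (mkseq s b).
have mono : forall j, 0 < j -> j <= b -> ole D (setdist e (s j) (mkseq s j)).
  move=> j j0 jb; apply: ole_trans (greedy j j0 (nob' j j0 jb) (s b)).
  apply: setdist_sub => w; rewrite /mkseq => /mapP [i]; rewrite mem_iota => /andP [_ ij] ->.
  apply: map_f; rewrite mem_iota; lia.
have pair : forall p r, p < r -> r <= b -> ole D (dist e (s r) (s p)).
  move=> p r pr rb; apply: ole_trans (mono r _ rb) _; first lia.
  apply: setdist_le; rewrite /mkseq; apply: map_f; rewrite mem_iota; lia.
pose f (p : 'I_b.+1) : 'I_b :=
  odflt (Ordinal b_pos) [pick i : 'I_b | s p \in ball e (nth x0 q i) (b - 1 - i)].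
have fP : forall p : 'I_b.+1, s p \in ball e (nth x0 q (f p)) (b - 1 - f p).
  move=> p; rewrite /f; case: pickP => [i //|none].
  have : s p \in Defs.cover e q by rewrite bq inE.
  move=> /(cover_mem x0) [i iq]; rewrite szq in iq * => h.
  by have := none (Ordinal iq); rewrite /= h.
have Dle : ole D (Some (2 * b - 2)).
  case: (boolP [exists p1, exists p2, (p1 != p2) && (f p1 == f p2)]).
    move=> /existsP [p1 /existsP [p2 /andP [ne /eqP feq]]].
    have key : forall a c : 'I_b.+1, a < c -> f a = f c -> ole D (Some (2 * b - 2)).
      move=> a c ac fac.
      apply: ole_trans (pair a c ac _) _; first by have := ltn_ord c; lia.
      have ha := fP a; have hc := fP c; rewrite inE in ha; rewrite inE in hc.
      rewrite -fac in hc.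
      apply: ole_trans (tri e_sym ha hc) _ => /=.
      have := ltn_ord (f a); lia.
    case: (ltngtP p1 p2) => h.
    - exact: key h feq.
    - exact: key h (esym feq).
    - by move: ne; rewrite (val_inj h) eqxx.
  rewrite negb_exists => /forallP ninj.
  have finj : injective f.
    move=> p1 p2 feq; case: (eqVneq p1 p2) => // ne.
    by have := ninj p1; rewrite negb_exists => /forallP /(_ p2); rewrite ne feq eqxx.
  by have := leq_card f finj; rewrite !card_ord ltnn.
exists (3 * b - 2); split => //; first lia.
apply/setP => u; rewrite inE.
have hu := ole_trans (greedy b b_pos (nob' b b_pos (leqnn b)) u) Dle.
case: (setdist_cases e u (mkseq s b)) => [hN | [w wS hw]]; first by rewrite hN in hu.
move: wS; rewrite /mkseq => /mapP [i]; rewrite mem_iota => /andP [_ ib] wi.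
rewrite -/(mkseq s (3 * b - 2)).
have isz : i < size (mkseq s (3 * b - 2)) by rewrite size_mkseq; lia.
apply: (subsetP (cover_nth e x0 isz)).
rewrite nth_mkseq; last lia.
rewrite size_mkseq inE.
apply: ole_trans (_ : ole (dist e u (s i)) (Some (2 * b - 2))) _.
  by rewrite -wi -hw.
rewrite /=; lia.
Qed.
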